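(* Let $n,m$ be positive integers. The player can win the $(n,m)$-game if and only if $n=1$, or $m=1$, or $(n,m)=(p^a,p^b)$ for some prime $p$ and some positive integers $a,b$.
   Context: The $(n,m)$-game: $n$ counters sit at positions $1,\dots,n$, the vertices (in cyclic order) of a regular $n$-gon table, the labels being fixed from the player's perspective. Each counter shows an element of $\mathbb{Z}_m$, so a configuration is a vector in $\mathbb{Z}_m^n$. The initial configuration is arbitrary and unknown to the player. Each turn the (blindfolded) player chooses a move $y\in\mathbb{Z}_m^n$, which is added coordinatewise to the current configuration; then the table is rotated by an arbitrary, adversarially chosen amount $k\in\mathbb{Z}_n$ (possibly different each turn), i.e. the configuration $x$ is replaced by $x'$ with $x'_{i+k}=x_i$ (indices mod $n$). The player wins if at some moment (including initially) all counters show $0$. Since the player receives no information, a strategy is a finite sequence of moves $y_1,\dots,y_N$; it is winning if for every initial configuration and every choice of rotations the configuration equals the zero vector at some time. ''The player can win'' means a winning finite sequence exists. *)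

(* Defs.v *)
From mathcomp Require Import all_boot.
Set Implicit Arguments. Unset Strict Implicit. Unset Printing Implicit Defensive.

(* A configuration of the (n,m)-game: counter at position i : 'I_n shows the
   class of (x i) in Z_m (natural-number representatives, read modulo m). *)
Definition config (n : nat) := 'I_n -> nat.

Definition shift (n k : nat) (i : 'I_n) : 'I_n :=
  Ordinal (ltn_pmod (i + k) (leq_ltn_trans (leq0n i) (ltn_ord i))).

(* rotation of the table by k: the new configuration x' satisfies
   x'_{i+k} = x_i, i.e. x'_j = x_{j-k} (indices mod n). *)
Definition rotate (n k : nat) (x : config n) : config n :=
  fun j => x (shift (n - k %% n) j).

Definition step (n k : nat) (y x : config n) : config n :=
  rotate k (fun i => x i + y i).

Fixpoint trajectory (n : nat) (x : config n) (s : seq (config n))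
    (ks : nat -> nat) : seq (config n) :=
  x :: match s with
       | [::] => [::]
       | y :: s' => trajectory (step (ks 0) y x) s' (fun t => ks t.+1)
       end.

Definition is_zero (n m : nat) (x : config n) : bool :=
  [forall i, x i %% m == 0].

Definition winning (n m : nat) (s : seq (config n)) : Prop :=
  forall (x0 : config n) (ks : nat -> nat),
    has (@is_zero n m) (trajectory x0 s ks).

Definition can_win (n m : nat) : Prop := exists s : seq (config n), winning m s.

(* Main.v *)
Require Import Defs.
From mathcomp Require Import all_boot all_algebra.
From Stdlib Require Import Classical.
From mathcomp Require Import ring.
Set Implicit Arguments. Unset Strict Implicit. Unset Printing Implicit Defensive.
Import GRing.Theory.

Lemma val_shift n k (i : 'I_n) : val (shift k i) = (i + k) %% n.
Proof. by []. Qed.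

Lemma shift_comp n a b (i : 'I_n) : shift a (shift b i) = shift (b + a) i.
Proof. by apply: val_inj; rewrite /= modnDml addnA. Qed.

Lemma shift0 n (i : 'I_n) : shift 0 i = i.
Proof. by apply: val_inj; rewrite /= addn0 modn_small. Qed.

Lemma shift_mulr n c (i : 'I_n) : shift (n * c) i = i.
Proof. by apply: val_inj; rewrite /= addnC mulnC modnMDl modn_small. Qed.

Lemma shift_inv n k (i : 'I_n) : shift k (shift (n - k %% n) i) = i.
Proof.
rewrite shift_comp; apply: val_inj => /=.
have hn : 0 < n by case: i => [j /= hj]; apply: leq_ltn_trans hj.
have -> : n - k %% n + k = n * (k %/ n).+1.
  rewrite {2}(divn_eq k n) addnCA subnK; last by apply: ltnW; rewrite ltn_mod.
  by rewrite mulnSr mulnC.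
by rewrite addnC mulnC modnMDl modn_small.
Qed.

Local Open Scope ring_scope.

Definition unrot (R : zmodType) n (a : nat) (x : {ffun 'I_n -> R}) : {ffun 'I_n -> R} :=
  [ffun i => x (shift a i)].
Definition rotZ (R : zmodType) n (k : nat) (x : {ffun 'I_n -> R}) := unrot (n - k %% n) x.
Definition stepZ (R : zmodType) n (k : nat) (y x : {ffun 'I_n -> R}) := rotZ k (x + y).
Fixpoint trajZ (R : zmodType) n (x : {ffun 'I_n -> R}) (s : seq {ffun 'I_n -> R})
    (ks : nat -> nat) : seq {ffun 'I_n -> R} :=
  x :: match s with
       | [::] => [::]
       | y :: s' => trajZ (stepZ (ks 0%N) y x) s' (fun t => ks t.+1)
       end.

Lemma rot_unrot (R : zmodType) n k (w : {ffun 'I_n -> R}) : rotZ k (unrot k w) = w.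
Proof. by apply/ffunP => i; rewrite !ffunE shift_inv. Qed.

Lemma unrot_comp (R : zmodType) n a b (x : {ffun 'I_n -> R}) :
  unrot a (unrot b x) = unrot (a + b) x.
Proof. by apply/ffunP => i; rewrite !ffunE shift_comp. Qed.

Lemma unrotC (R : zmodType) n a b (x : {ffun 'I_n -> R}) :
  unrot a (unrot b x) = unrot b (unrot a x).
Proof. by rewrite !unrot_comp addnC. Qed.

Lemma unrotD (R : zmodType) n a (x y : {ffun 'I_n -> R}) :
  unrot a (x + y) = unrot a x + unrot a y.
Proof. by apply/ffunP => i; rewrite !ffunE. Qed.

Lemma unrotN (R : zmodType) n a (x : {ffun 'I_n -> R}) : unrot a (- x) = - unrot a x.
Proof. by apply/ffunP => i; rewrite !ffunE. Qed.

Lemma unrotB (R : zmodType) n a (x y : {ffun 'I_n -> R}) :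
  unrot a (x - y) = unrot a x - unrot a y.
Proof. by rewrite unrotD unrotN. Qed.

Lemma unrot0 (R : zmodType) n a : unrot a (0 : {ffun 'I_n -> R}) = 0.
Proof. by apply/ffunP => i; rewrite !ffunE. Qed.

Lemma unrot_id0 (R : zmodType) n (x : {ffun 'I_n -> R}) : unrot 0 x = x.
Proof. by apply/ffunP => i; rewrite !ffunE shift0. Qed.

Lemma unrotMn (R : zmodType) n a (x : {ffun 'I_n -> R}) c : unrot a (x *+ c) = unrot a x *+ c.
Proof. by apply/ffunP => i; rewrite !ffunE !ffunMnE !ffunE. Qed.

Definition phi (m n : nat) (x : config n) : {ffun 'I_n -> 'Z_m} := [ffun i => (x i)%:R].
Definition psi (m n : nat) (z : {ffun 'I_n -> 'Z_m}) : config n := fun i => val (z i).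

Lemma phi_psi m n (z : {ffun 'I_n -> 'Z_m}) : phi m (psi z) = z.
Proof. by apply/ffunP => i; rewrite ffunE /psi natr_Zp. Qed.

Lemma phi_step m n k (y x : config n) :
  phi m (step k y x) = stepZ k (phi m y) (phi m x).
Proof. by apply/ffunP => j; rewrite !ffunE /step /rotate natrD. Qed.

Lemma traj_phi m n (x : config n) s ks :
  map (@phi m n) (trajectory x s ks) = trajZ (phi m x) (map (@phi m n) s) ks.
Proof.
elim: s x ks => [|y s IH] x ks //=.
by rewrite IH phi_step.
Qed.

Lemma is_zero_phi m n (x : config n) : (1 < m)%N ->
  is_zero m x = (phi m x == 0).
Proof.
move=> hm; apply/forallP/eqP => [h|h].
  apply/ffunP => i; rewrite !ffunE; apply: val_inj.
  by rewrite /= (val_Zp_nat hm) (eqP (h i)).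
move=> i; have := congr1 (fun f : {ffun 'I_n -> 'Z_m} => val (f i)) h.
by rewrite /= !ffunE /= (val_Zp_nat hm) => ->.
Qed.

Lemma trajZ_head (R : zmodType) n (x : {ffun 'I_n -> R}) s ks (P : pred _) :
  P x -> has P (trajZ x s ks).
Proof. by case: s => [|y s] /= ->. Qed.

Lemma no_win (R : zmodType) n (Zp : pred {ffun 'I_n -> R}) :
  (forall w y, (forall k, Zp (unrot k w - y)) -> Zp w) ->
  forall s, (forall x ks, has Zp (trajZ x s ks)) -> forall x, Zp x.
Proof.
move=> hfix; elim=> [|y s IH] h.
  by move=> x; have := h x (fun _ => 0%N); rewrite /= orbF.
apply: IH => w ks'.
case: (classic (exists k, ~~ Zp (unrot k w - y))) => [[k hk]|hno].
  have := h (unrot k w - y) (fun t => if t is t'.+1 then ks' t' else k).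
  rewrite /= (negbTE hk) /= /stepZ subrK rot_unrot.
  exact.
apply: trajZ_head; apply: (hfix w y) => k.
by case: (boolP (Zp (unrot k w - y))) => // hk; exfalso; apply: hno; exists k.
Qed.

Definition Ssum (R : zmodType) n (q : nat) (x : {ffun 'I_n -> R}) (j : nat) : R :=
  \sum_(i < n | (i == j %[mod q])%N) x i.

Lemma shift_inv' n k (i : 'I_n) : shift (n - k %% n) (shift k i) = i.
Proof. by rewrite shift_comp addnC -shift_comp shift_inv. Qed.

Lemma shift_inj n k : injective (@shift n k).
Proof. by move=> i j h; rewrite -(shift_inv' k i) h shift_inv'. Qed.

Lemma Ssum_mod (R : zmodType) n q (x : {ffun 'I_n -> R}) j : Ssum q x (j %% q) = Ssum q x j.
Proof. by rewrite /Ssum; apply: eq_bigl => i; rewrite modn_mod. Qed.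

Lemma SsumD (R : zmodType) n q (x y : {ffun 'I_n -> R}) j :
  Ssum q (x + y) j = Ssum q x j + Ssum q y j.
Proof. by rewrite /Ssum -big_split; apply: eq_bigr => i _; rewrite ffunE. Qed.

Lemma SsumN (R : zmodType) n q (x : {ffun 'I_n -> R}) j :
  Ssum q (- x) j = - Ssum q x j.
Proof. by rewrite /Ssum -sumrN; apply: eq_bigr => i _; rewrite ffunE. Qed.

Lemma SsumB (R : zmodType) n q (x y : {ffun 'I_n -> R}) j :
  Ssum q (x - y) j = Ssum q x j - Ssum q y j.
Proof. by rewrite SsumD SsumN. Qed.

Lemma Ssum_unrot (R : zmodType) n q (x : {ffun 'I_n -> R}) k j : (q %| n)%N ->
  Ssum q (unrot k x) j = Ssum q x (j + k).
Proof.
move=> hq; rewrite /Ssum [RHS](reindex_inj (@shift_inj n k)) /=.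
apply: eq_big => [i|i _]; last by rewrite ffunE.
by rewrite /= (modn_dvdm _ hq) eqn_modDr.
Qed.

Definition Zq (R : zmodType) n q : pred {ffun 'I_n -> R} :=
  fun x => [forall j : 'I_q, Ssum q x j == Ssum q x 0].

Lemma ZqP (R : zmodType) n q (x : {ffun 'I_n -> R}) : (0 < q)%N ->
  reflect (forall j, Ssum q x j = Ssum q x 0) (Zq q x).
Proof.
move=> hq; apply: (iffP forallP) => h j; last by apply/eqP.
by rewrite -Ssum_mod; apply/eqP; apply: (h (Ordinal (ltn_pmod j hq))).
Qed.

Lemma Zq_fix (p n q : nat) : prime p -> prime q -> (q %| n)%N -> p != q ->
  forall w y : {ffun 'I_n -> 'Z_p},
  (forall k, Zq q (unrot k w - y)) -> Zq q w.
Proof.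
move=> pp pq qn pq_neq w y h.
have q0 : (0 < q)%N by apply: prime_gt0.
have a j : Ssum q w j = Ssum q w 0 - Ssum q y 0 + Ssum q y j.
  have := (ZqP _ q0 (h 0%N)) j; rewrite unrot_id0 !SsumB => e.
  by rewrite -e subrK.
have b j : Ssum q w j.+1 = Ssum q w 1 - Ssum q y 0 + Ssum q y j.
  have := (ZqP _ q0 (h 1%N)) j; rewrite !SsumB !Ssum_unrot // add0n addn1 => e.
  by rewrite -e subrK.
set d := Ssum q w 1 - Ssum q w 0.
have c j : Ssum q w j = Ssum q w 0 + d *+ j.
  elim: j => [|j IH]; first by rewrite mulr0n addr0.
  have e : d *+ j = Ssum q y j - Ssum q y 0.
    move: IH; rewrite (a j) => IH.
    apply: (addrI (Ssum q w 0)); rewrite -IH; ring.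
  by rewrite b mulrS e /d; ring.
have dq : d *+ q = 0.
  have := c q; rewrite -Ssum_mod modnn => e.
  by apply: (addrI (Ssum q w 0)); rewrite addr0 -e.
have d0 : d = 0.
  have p1 : (1 < p)%N by apply: prime_gt1.
  have u : (q%:R : 'Z_p) \is a GRing.unit.
    by rewrite unitZpE // prime_coprime // dvdn_prime2.
  by apply: (mulIr u); rewrite mul0r mulr_natr.
apply/ZqP => // j; by rewrite c d0 mul0rn addr0.
Qed.

Lemma Zq0 (R : zmodType) n q : Zq q (0 : {ffun 'I_n -> R}).
Proof. by apply/forallP => j; rewrite /Ssum !big1 // => i _; rewrite ffunE. Qed.

Lemma is_zero_dvd n m p (x : config n) : (p %| m)%N -> is_zero m x -> is_zero p x.
Proof.
move=> hpm /forallP h; apply/forallP => i.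
by rewrite -(modn_dvdm _ hpm) (eqP (h i)) mod0n.
Qed.

Lemma Zq_bad (R : nzRingType) n q : (0 < n)%N -> (1 < q)%N ->
  ~~ Zq q [ffun i : 'I_n => ((val i == 0%N)%:R : R)].
Proof.
move=> n0 q1; apply/negP => /forallP /(_ (Ordinal q1)) /eqP.
have q0 : (0 < q)%N by apply: ltnW.
set F := [ffun i : 'I_n => ((val i == 0%N)%:R : R)].
have h1 : Ssum q F 1 = 0.
  rewrite /Ssum big1 // => i hi; rewrite ffunE; case: eqP => // hv; move: hi.
  by rewrite hv mod0n (modn_small q1).
have h0 : Ssum q F 0 = 1.
  rewrite /Ssum (bigD1 (Ordinal n0)) ?mod0n //= big1.
    by rewrite ffunE /= addr0.
  move=> i /andP [_ hi]; rewrite ffunE; case: (val i =P 0%N) => // hv.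
  by case/eqP: hi; apply: val_inj.
by rewrite /= h1 h0 => /esym/eqP; rewrite oner_eq0.
Qed.

Lemma necessity n m p q : (0 < n)%N -> prime p -> prime q -> (p %| m)%N -> (q %| n)%N ->
  p != q -> ~ can_win n m.
Proof.
move=> n0 pp pq pm qn pq_neq [s hs].
have p1 : (1 < p)%N by apply: prime_gt1.
have q1 : (1 < q)%N by apply: prime_gt1.
have hw : forall z ks, has (Zq q) (trajZ z (map (@phi p n) s) ks).
  move=> z ks; rewrite -(phi_psi z) -traj_phi has_map.
  apply: sub_has (hs (psi z) ks) => x /= hx.
  have := is_zero_dvd pm hx; rewrite (is_zero_phi _ p1) => /eqP ->.
  exact: Zq0.
have := no_win (Zq_fix pp pq qn pq_neq) hw [ffun i : 'I_n => ((val i == 0%N)%:R : 'Z_p)].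
have hb : ~~ Zq q [ffun i : 'I_n => ((val i == 0%N)%:R : 'Z_p)] := @Zq_bad _ n q n0 q1.
by move=> h; move: hb; rewrite h.
Qed.

Definition Dop (m n : nat) (x : {ffun 'I_n -> 'Z_m}) := x - rotZ 1 x.
Definition Kf (m n j : nat) : pred {ffun 'I_n -> 'Z_m} := fun x => iter j (@Dop m n) x == 0.

Ltac ffring := apply/ffunP => ?; rewrite !ffunE; ring.

Lemma DopB m n (x y : {ffun 'I_n -> 'Z_m}) : Dop (x - y) = Dop x - Dop y.
Proof. rewrite /Dop /rotZ unrotB; ffring. Qed.

Lemma Dop0 m n : Dop (0 : {ffun 'I_n -> 'Z_m}) = 0.
Proof. by rewrite /Dop /rotZ unrot0 subr0. Qed.

Lemma iterB m n j (x y : {ffun 'I_n -> 'Z_m}) :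
  iter j (@Dop m n) (x - y) = iter j (@Dop m n) x - iter j (@Dop m n) y.
Proof. by elim: j => //= j ->; rewrite DopB. Qed.

Lemma iter0 m n j : iter j (@Dop m n) 0 = 0.
Proof. by elim: j => //= j ->; rewrite Dop0. Qed.

Lemma Dop_unrot m n a (x : {ffun 'I_n -> 'Z_m}) : Dop (unrot a x) = unrot a (Dop x).
Proof. by rewrite /Dop /rotZ unrotB unrotC. Qed.

Lemma iter_unrot m n j a (x : {ffun 'I_n -> 'Z_m}) :
  iter j (@Dop m n) (unrot a x) = unrot a (iter j (@Dop m n) x).
Proof. by elim: j => //= j ->; rewrite Dop_unrot. Qed.

Lemma KfB m n j (x y : {ffun 'I_n -> 'Z_m}) : Kf j x -> Kf j y -> Kf j (x - y).
Proof. by rewrite /Kf iterB => /eqP -> /eqP ->; rewrite subr0. Qed.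

Lemma Kf0 m n j : Kf j (0 : {ffun 'I_n -> 'Z_m}).
Proof. by rewrite /Kf iter0. Qed.

Lemma KfN m n j (x : {ffun 'I_n -> 'Z_m}) : Kf j x -> Kf j (- x).
Proof. by move=> h; rewrite -sub0r; apply: KfB => //; apply: Kf0. Qed.

Lemma KfD m n j (x y : {ffun 'I_n -> 'Z_m}) : Kf j x -> Kf j y -> Kf j (x + y).
Proof. by move=> hx hy; rewrite -(opprK y); apply: KfB => //; apply: KfN. Qed.

Lemma Kf_unrot m n j a (x : {ffun 'I_n -> 'Z_m}) : Kf j x -> Kf j (unrot a x).
Proof. by rewrite /Kf iter_unrot => /eqP ->; rewrite unrot0. Qed.

Lemma Kf_rotZ m n j k (x : {ffun 'I_n -> 'Z_m}) : Kf j x -> Kf j (rotZ k x).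
Proof. exact: Kf_unrot. Qed.

Lemma Kf_mono m n j (x : {ffun 'I_n -> 'Z_m}) : Kf j x -> Kf j.+1 x.
Proof. by rewrite /Kf /= => /eqP ->; rewrite Dop0. Qed.

Lemma Kf_unrot_diff m n j a (x : {ffun 'I_n -> 'Z_m}) :
  Kf j.+1 x -> Kf j (unrot a x - x).
Proof.
move=> hx; elim: a => [|a IH]; first by rewrite unrot_id0 subrr Kf0.
have -> : unrot a.+1 x - x = (unrot 1 (unrot a x) - unrot a x) + (unrot a x - x).
  by rewrite unrot_comp add1n; ffring.
apply: KfD => //.
have hy : Kf j.+1 (unrot a x) by apply: Kf_unrot.
have -> : unrot 1 (unrot a x) - unrot a x = Dop (unrot 1 (unrot a x)).
  by rewrite /Dop -[rotZ 1 _]/(rotZ 1 (unrot 1 (unrot a x))) rot_unrot.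
by rewrite /Kf -iterSr iter_unrot; move/eqP: hy => ->; rewrite unrot0.
Qed.

Lemma Kf_step m n j k (y z : {ffun 'I_n -> 'Z_m}) :
  Kf j.+1 (z + y) -> Kf j (stepZ k y z - (z + y)).
Proof. exact: Kf_unrot_diff. Qed.

Fixpoint finZ (R : zmodType) n (x : {ffun 'I_n -> R}) (s : seq {ffun 'I_n -> R})
    (ks : nat -> nat) : {ffun 'I_n -> R} :=
  match s with
  | [::] => x
  | y :: s' => finZ (stepZ (ks 0%N) y x) s' (fun t => ks t.+1)
  end.

Lemma has_traj_cat1 (R : zmodType) n (P : pred {ffun 'I_n -> R}) x s1 s2 ks :
  has P (trajZ x s1 ks) -> has P (trajZ x (s1 ++ s2) ks).
Proof.
elim: s1 x ks => [|y s1 IH] x ks /=; first by rewrite orbF => h; apply: trajZ_head.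
by case/orP => [->//|h]; rewrite IH ?orbT.
Qed.

Lemma has_traj_cat2 (R : zmodType) n (P : pred {ffun 'I_n -> R}) x s1 s2 ks :
  (forall ks2, has P (trajZ (finZ x s1 ks) s2 ks2)) -> has P (trajZ x (s1 ++ s2) ks).
Proof.
elim: s1 x ks => [|y s1 IH] x ks /=; first by apply.
by move=> h; rewrite IH ?orbT.
Qed.

Definition eq0 (m n : nat) : pred {ffun 'I_n -> 'Z_m} := fun x => x == 0.

Lemma finZ_inv m n j (s : seq {ffun 'I_n -> 'Z_m}) z ks :
  all (Kf j) s -> Kf j.+1 z -> Kf j.+1 (finZ z s ks) && Kf j (finZ z s ks - z).
Proof.
elim: s z ks => [|y s IH] z ks /=; first by move=> _ ->; rewrite subrr Kf0.
case/andP => hy hs hz.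
have hzy : Kf j.+1 (z + y) by apply: KfD => //; apply: Kf_mono.
have h1 : Kf j.+1 (stepZ (ks 0%N) y z) by apply: Kf_rotZ.
have h2 : Kf j (stepZ (ks 0%N) y z - z).
  have -> : stepZ (ks 0%N) y z - z = (stepZ (ks 0%N) y z - (z + y)) + y by ffring.
  by apply: KfD => //; apply: Kf_step.
case/andP: (IH (stepZ (ks 0%N) y z) (fun t => ks t.+1) hs h1) => -> h3 /=.
have -> : finZ (stepZ (ks 0%N) y z) s (fun t => ks t.+1) - z =
  (finZ (stepZ (ks 0%N) y z) s (fun t => ks t.+1) - stepZ (ks 0%N) y z) +
  (stepZ (ks 0%N) y z - z) by ffring.
exact: KfD.
Qed.

Fixpoint Tstrat (A : Type) (negf : A -> A) (s' : seq A) (E : seq A) : seq A :=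
  match E with
  | [::] => s'
  | e :: E' => s' ++ e :: s' ++ negf e :: Tstrat negf s' E'
  end.

Lemma TE m n j (s' : seq {ffun 'I_n -> 'Z_m}) :
  all (Kf j) s' -> (forall x, Kf j x -> forall ks, has (@eq0 m n) (trajZ x s' ks)) ->
  forall E, all (Kf j.+1) E ->
  forall x, Kf j.+1 x -> (Kf j x \/ exists2 e, e \in E & Kf j (x + e)) ->
  forall ks, has (@eq0 m n) (trajZ x (Tstrat (fun e => - e) s' E) ks).
Proof.
move=> hs'K hs'; elim=> [|e E IH] /=.
  by move=> _ x _ [h|[e]] //; apply: hs'.
case/andP => he hE x hx hor ks.
case: (boolP (Kf j x)) => hxj; first by apply: has_traj_cat1; apply: hs'.
have [e0 he0 hxe0] : exists2 e0, e0 \in e :: E & Kf j (x + e0).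
  by case: hor => // h; move: hxj; rewrite h.
apply: has_traj_cat2 => ks2 /=.
set w := finZ x s' ks.
case/andP: (finZ_inv ks hs'K hx) => hw hwx.
apply/orP; right.
set w1 := stepZ (ks2 0%N) e w.
have hwe : Kf j.+1 (w + e) by apply: KfD.
have hw1 : Kf j.+1 w1 by apply: Kf_rotZ.
have hw1d : Kf j (w1 - (w + e)) by apply: Kf_step.
case: (boolP (e0 == e)) => [/eqP ee|ne].
  apply: has_traj_cat1; apply: hs'.
  have -> : w1 = (w1 - (w + e)) + (w - x) + (x + e) by ffring.
  by apply: KfD; [apply: KfD|rewrite -ee].
have he0E : e0 \in E by move: he0; rewrite in_cons (negbTE ne).
apply: has_traj_cat2 => ks3 /=.
set w2 := finZ w1 s' _.
case/andP: (finZ_inv (fun t => ks2 t.+1) hs'K hw1) => hw2 hw2d.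
apply/orP; right.
set w3 := stepZ (ks3 0%N) (- e) w2.
have hw2e : Kf j.+1 (w2 + - e) by apply: KfD => //; apply: KfN.
have hw3 : Kf j.+1 w3 by apply: Kf_rotZ.
have hw3d : Kf j (w3 - (w2 + - e)) by apply: Kf_step.
apply: IH => //; right; exists e0 => //.
have -> : w3 + e0 = (w3 - (w2 + - e)) + (w2 - w1) + (w1 - (w + e)) + (w - x) + (x + e0)
  by ffring.
by apply: KfD => //; apply: KfD => //; apply: KfD => //; apply: KfD.
Qed.

Lemma all_Tstrat m n j (s' E : seq {ffun 'I_n -> 'Z_m}) :
  all (Kf j.+1) s' -> all (Kf j.+1) E -> all (Kf j.+1) (Tstrat (fun e => - e) s' E).
Proof.
move=> hs; elim: E => [|e E IH] //= /andP [he hE].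
rewrite /= all_cat hs /=; apply/andP; split => //.
rewrite all_cat hs /=; apply/andP; split; [exact: KfN | exact: IH].
Qed.

Lemma strat_exists m n j : exists s : seq {ffun 'I_n -> 'Z_m},
  all (Kf j) s /\ forall x, Kf j x -> forall ks, has (@eq0 m n) (trajZ x s ks).
Proof.
elim: j => [|j [s' [hK hw]]].
  by exists [::]; split => // x hx ks; apply: trajZ_head.
pose E := enum (@Kf m n j.+1).
exists (Tstrat (fun e => - e) s' E); split.
  apply: all_Tstrat.
    by apply/allP => y hy; apply: Kf_mono; move/allP: hK; apply.
  by apply/allP => y; rewrite mem_enum.
move=> x hx ks; apply: (@TE m n j s' hK hw E) => //.
  by apply/allP => y; rewrite mem_enum.
right; exists (- x); first by rewrite mem_enum; apply: KfN.
by rewrite subrr Kf0.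
Qed.

Lemma suff_Z m n : (1 < m)%N ->
  (exists N, forall x : {ffun 'I_n -> 'Z_m}, iter N (@Dop m n) x = 0) -> can_win n m.
Proof.
move=> m1 [N hN].
have [sZ [_ hs]] := strat_exists m n N.
exists (map (@psi m n) sZ) => x0 ks.
have e : map (@phi m n) (map (@psi m n) sZ) = sZ.
  by rewrite -map_comp (eq_map (@phi_psi m n)) map_id.
have hk : Kf N (phi m x0) by rewrite /Kf hN.
have h := hs (phi m x0) hk ks.
rewrite -e -traj_phi has_map in h.
by apply: sub_has h => x /=; rewrite is_zero_phi.
Qed.

Lemma bump0 l : bump 0 l = l.+1.
Proof. by rewrite /bump leq0n add1n. Qed.

Lemma Dop_val m n (y : {ffun 'I_n -> 'Z_m}) i : Dop y i = y i - y (shift (n - 1 %% n)%N i).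
Proof. by rewrite /Dop /rotZ !ffunE. Qed.

Lemma iterD_formula m n j (x : {ffun 'I_n -> 'Z_m}) i :
  iter j (@Dop m n) x i =
  \sum_(l < j.+1) (-1) ^+ l * 'C(j, l)%:R * x (shift (l * (n - 1 %% n))%N i).
Proof.
set c := (n - 1 %% n)%N.
elim: j i => [|j IH] i.
  by rewrite /= big_ord1 expr0 bin0 !mul1r mul0n shift0.
rewrite iterS Dop_val !IH.
set g := fun l => x (shift (l * c)%N i).
have hg : forall l, x (shift (l * c)%N (shift c i)) = g l.+1.
  by move=> l; rewrite /g shift_comp mulSn.
under [in X in _ - X]eq_bigr do rewrite hg.
rewrite [in RHS]big_ord_recl /=.
under [in RHS]eq_bigr do rewrite bump0 binS natrD mulrDr mulrDl.
rewrite big_split /=.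
have e1 : \sum_(l < j.+1) (-1) ^+ l * 'C(j, l)%:R * g l =
          1 * 'C(j,0)%:R * g 0%N + \sum_(l < j) (-1) ^+ (l.+1) * 'C(j, l.+1)%:R * g l.+1.
  rewrite big_ord_recl /= expr0; congr (_ + _).
have e2 : \sum_(l < j.+1) (-1) ^+ (l.+1) * 'C(j, l.+1)%:R * g l.+1 =
          \sum_(l < j) (-1) ^+ (l.+1) * 'C(j, l.+1)%:R * g l.+1.
  by rewrite big_ord_recr /= bin_small // mulr0n mulr0 mul0r addr0.
have e3 : \sum_(l < j.+1) (-1) ^+ l.+1 * 'C(j, l)%:R * x (shift (l.+1 * c)%N i) =
  - \sum_(l < j.+1) (-1) ^+ l * 'C(j, l)%:R * g l.+1.
  rewrite -sumrN; apply: eq_bigr => l _; rewrite /g exprS; ring.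
rewrite e3 e2 e1 /g /= !bin0 expr0; ring.
Qed.

Lemma p_dvd_bin p a l : prime p -> (0 < l < p ^ a)%N -> (p %| 'C(p ^ a, l))%N.
Proof.
move=> pp; case: l => [//|l] /andP [_ hl].
have h : (p ^ a %| l.+1 * 'C(p ^ a, l.+1))%N by rewrite -mul_bin_diag dvdn_mulr.
apply: contraT => hn.
have cop : coprime (p ^ a) 'C(p ^ a, l.+1) by apply: coprimeXl; rewrite prime_coprime // hn.
rewrite Gauss_dvdl // in h.
by move: (dvdn_leq (ltn0Sn l) h); rewrite leqNgt hl.
Qed.

Lemma iter_n_div m n p a (x : {ffun 'I_n -> 'Z_m}) : prime p -> (0 < a)%N -> n = (p ^ a)%N ->
  exists w : {ffun 'I_n -> 'Z_m}, iter n (@Dop m n) x = w *+ p.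
Proof.
move=> pp a0 en.
have n0 : (0 < n)%N by rewrite en expn_gt0 prime_gt0.
suff : forall i, exists u, iter n (@Dop m n) x i = u *+ p.
  case/fin_all_exists => u hu; exists [ffun i => u i].
  by apply/ffunP => i; rewrite ffunMnE ffunE hu.
move=> i; rewrite iterD_formula.
set c := (n - 1 %% n)%N.
rewrite -(big_mkord xpredT (fun l => (-1) ^+ l * 'C(n, l)%:R * x (shift (l * c)%N i))).
rewrite big_ltn // big_nat_recr //=.
set M := \sum_(1 <= l < n) (-1) ^+ l * ('C(n, l) %/ p)%:R * x (shift (l * c)%N i).
have hM : \sum_(1 <= l < n) (-1) ^+ l * 'C(n, l)%:R * x (shift (l * c)%N i) = M *+ p.
  rewrite /M -sumrMnl; apply: eq_big_nat => l hl.
  have e : ('C(n, l)%:R : 'Z_m) = ('C(n, l) %/ p)%:R * p%:R.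
    by rewrite -natrM divnK // en; apply: p_dvd_bin => //; rewrite -en.
  by rewrite e -mulr_natr; ring.
rewrite hM bin0 binn mul0n shift0 shift_mulr expr0 !mulr1 mul1r.
have hodd : odd n = odd p by rewrite en oddX eqn0Ngt a0.
rewrite -signr_odd hodd.
case: (even_prime pp) => [p2|->].
  by exists (M + x i); rewrite p2 /=; ring.
by exists M; rewrite expr1; ring.
Qed.

Lemma iterMn m n j c (x : {ffun 'I_n -> 'Z_m}) :
  iter j (@Dop m n) (x *+ c) = iter j (@Dop m n) x *+ c.
Proof.
elim: j => //= j ->; apply/ffunP => i.
by rewrite ffunMnE !Dop_val !ffunMnE mulrnBl.
Qed.

Lemma Zm_char m (z : 'Z_m) : (1 < m)%N -> z *+ m = 0.
Proof.
move=> m1; rewrite -mulr_natr.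
have -> : (m%:R : 'Z_m) = 0 by apply: val_inj; rewrite /= (val_Zp_nat m1) modnn.
by rewrite mulr0.
Qed.

Lemma nilp m n p a b : prime p -> (0 < a)%N -> (0 < b)%N -> n = (p ^ a)%N -> m = (p ^ b)%N ->
  forall x : {ffun 'I_n -> 'Z_m}, iter (n * b) (@Dop m n) x = 0.
Proof.
move=> pp a0 b0 en em.
have m1 : (1 < m)%N by rewrite em -(expn0 p) ltn_exp2l ?prime_gt1.
suff h : forall k (x : {ffun 'I_n -> 'Z_m}), exists w, iter (n * k) (@Dop m n) x = w *+ (p ^ k).
  move=> x; have [w ->] := h b x; apply/ffunP => i.
  by rewrite ffunMnE ffunE -em Zm_char.
elim=> [|k IH] x; first by exists x; rewrite muln0 expn0 mulr1n.
have [w hw] := IH x.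
have [w' hw'] := iter_n_div w pp a0 en.
exists w'; rewrite mulnS iterD hw iterMn hw' -mulrnA expnS.
by [].
Qed.

Lemma Dop1 m (x : {ffun 'I_1 -> 'Z_m}) : iter 1 (@Dop m 1) x = 0.
Proof.
apply/ffunP => i; rewrite /= Dop_val ffunE.
have -> : shift (1 - 1 %% 1)%N i = i by apply: val_inj; rewrite /= modn1; case: i => [[]].
by rewrite subrr.
Qed.

Lemma pow_or_other p n : prime p -> (p %| n)%N -> (1 < n)%N ->
  (exists a, (0 < a)%N /\ n = (p ^ a)%N) \/ (exists r, [/\ prime r, (r %| n)%N & r != p]).
Proof.
move=> pp pn n1; have n0 : (0 < n)%N by apply: ltnW.
case: (boolP (p.-nat n)) => h; [left|right].
  exists (logn p n); split.
    by rewrite logn_gt0 mem_primes pp n0 pn.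
  have := part_pnat_id h; rewrite p_part => ->; by [].
apply: NNPP => hn; move/negP: h; apply; apply/(pnatP p n0) => r pr rn; rewrite inE.
by apply: contraT => hr; exfalso; apply: hn; exists r.
Qed.

Lemma can_win_m1 n : can_win n 1.
Proof.
exists [::] => x0 ks /=; rewrite orbF; apply/forallP => i; by rewrite modn1.
Qed.

Local Close Scope ring_scope.

Theorem theorem1p1 (n m : nat) :
  0 < n -> 0 < m ->
  (can_win n m <->
   (n = 1 \/ m = 1 \/
    exists p a b : nat, [/\ prime p, 0 < a, 0 < b, n = p ^ a & m = p ^ b])).
Proof.
move=> n0 m0; split.
  move=> hw.
  case: (ltngtP n 1) => [|n1|->]; last by left.
    by rewrite ltnS leqn0 => /eqP n00; rewrite n00 in n0.
  case: (ltngtP m 1) => [|m1|->]; last by right; left.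
    by rewrite ltnS leqn0 => /eqP m00; rewrite m00 in m0.
  right; right.
  set p := pdiv m.
  have pp : prime p by apply: pdiv_prime.
  have pm : (p %| m)%N by apply: pdiv_dvd.
  set q := pdiv n.
  have pq : prime q by apply: pdiv_prime.
  have qn : (q %| n)%N by apply: pdiv_dvd.
  case: (eqVneq p q) => [epq|npq]; last first.
    by case: (necessity n0 pp pq pm qn npq hw).
  case: (pow_or_other pp pm m1) => [[b [b0 eb]]|[r [pr rm rp]]]; last first.
    exfalso; apply: (necessity n0 pr pq rm qn _ hw); by rewrite -epq.
  rewrite -epq in qn.
  case: (pow_or_other pp qn n1) => [[a [a0 ea]]|[r [pr rn rp]]]; last first.
    exfalso; apply: (necessity n0 pp pr pm rn _ hw); by rewrite eq_sym.
  by exists p, a, b.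
case=> [en|[em|[p [a [b [pp a0 b0 en em]]]]]].
- case: (ltngtP m 1) => [|m1|->]; last exact: can_win_m1.
    by rewrite ltnS leqn0 => /eqP m00; rewrite m00 in m0.
  subst n; apply: suff_Z => //; exists 1%N; exact: Dop1.
- by rewrite em; apply: can_win_m1.
- have m1 : 1 < m by rewrite em -(expn0 p) ltn_exp2l ?prime_gt1.
  apply: suff_Z => //; exists (n * b)%N; exact: nilp pp a0 b0 en em.
Qed.
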